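(* Fix $k\ge0$. Let $\mathcal G$ be a discrete groupoid acting self-similarly on a finitely aligned $(k+1)$-graph $\Lambda$, and let $\Gamma=d^{-1}(\mathbb N^k\times\{0\})$. Then $\Gamma\bowtie\mathcal G$ is a concordant subcategory of $\Lambda\bowtie\mathcal G$.
   Context: A $(k+1)$-graph is a countable small category $\Lambda$ with a functor $d:\Lambda\to\mathbb N^{k+1}$ such that whenever $d(\lambda)=m+n$ there are unique $\mu,\nu$ with $\lambda=\mu\nu$, $d(\mu)=m$, $d(\nu)=n$; it is finitely aligned if for all $\mu,\nu$ there is finite $F$ with $\mu\Lambda\cap\nu\Lambda=\bigcup_{c\in F}c\Lambda$. A self-similar action of a discrete groupoid $\mathcal G$ ($\mathcal G^0=\Lambda^0$) on $\Lambda$ consists of a left action $g\triangleright\lambda\in\Lambda$ and right action $g\triangleleft\lambda\in\mathcal G$ (for $s(g)=r(\lambda)$) with $s(g\triangleright\lambda)=r(g\triangleleft\lambda)$, $g\triangleright(\lambda\mu)=(g\triangleright\lambda)((g\triangleleft\lambda)\triangleright\mu)$, $(gh)\triangleleft\lambda=(g\triangleleft(h\triangleright\lambda))(h\triangleleft\lambda)$, and $d(g\triangleright\lambda)=d(\lambda)$. $\Lambda\bowtie\mathcal G$ is the Zappa–Szép product: morphisms $\lambda g$ ($s(\lambda)=r(g)$) with product $\lambda g\mu h=\lambda(g\triangleright\mu)(g\triangleleft\mu)h$; $\Gamma\bowtie\mathcal G$ is a subcategory. For a finitely aligned left-cancellative category $\mathcal X$ ($x\mathcal X=\{xx'\}$,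 $F\mathcal X=\bigcup_{c\in F}c\mathcal X$, $F$ independent if $a\notin a'\mathcal X$ for distinct $a,a'\in F$), a subcategory $\mathcal C$ is concordant if for all $c_1,c_2\in\mathcal C$ with $c_1\mathcal X\cap c_2\mathcal X\ne\emptyset$ there is a finite independent $F\subseteq\mathcal C$ with $c_1\mathcal C\cap c_2\mathcal C=F\mathcal C$ such that whenever $x_1,x_2\in\mathcal X$ satisfy $c_1x_1=c_2x_2$, there exist $a_1,a_2$ with $c_1a_1=c_2a_2\in F$ and $y\in\mathcal X$ with $x_1=a_1y$, $x_2=a_2y$. *)

(* Defs.v *)
From mathcomp Require Import all_boot.
From Stdlib Require Import List.

Set Implicit Arguments.
Unset Strict Implicit.
Unset Printing Implicit Defensive.

Definition degadd (n : nat) (a b : {ffun 'I_n -> nat}) : {ffun 'I_n -> nat} :=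
  [ffun i => a i + b i].

(* Generic partial-composition category data: a type X of morphisms, a
   predicate [valid] carving out the actual morphisms, source/range maps and a
   (total, meaningful only on composable pairs) composition.                 *)

Definition right_mult (X O : Type) (D : X -> Prop) (src rng : X -> O)
  (comp : X -> X -> X) (c y : X) : Prop :=
  exists x, D x /\ src c = rng x /\ y = comp c x.

Definition concordant (X O : Type) (valid : X -> Prop) (src rng : X -> O)
  (comp : X -> X -> X) (C : X -> Prop) : Prop :=
  forall c1 c2 : X, C c1 -> C c2 ->
  (exists y, right_mult valid src rng comp c1 y /\
             right_mult valid src rng comp c2 y) ->
  exists F : list X,
    (forall a, In a F -> C a) /\
    (forall a a', In a F -> In a' F -> a <> a' ->
        ~ right_mult valid src rng comp a' a) /\
    (forall y, (right_mult C src rng comp c1 y /\ right_mult C src rng comp c2 y)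
               <-> exists a, In a F /\ right_mult C src rng comp a y) /\
    (forall x1 x2, valid x1 -> valid x2 -> src c1 = rng x1 -> src c2 = rng x2 ->
       comp c1 x1 = comp c2 x2 ->
       exists a1 a2 y, valid a1 /\ valid a2 /\ valid y /\
         src c1 = rng a1 /\ src c2 = rng a2 /\
         comp c1 a1 = comp c2 a2 /\ In (comp c1 a1) F /\
         src a1 = rng y /\ src a2 = rng y /\
         x1 = comp a1 y /\ x2 = comp a2 y).

Record ngraph (n : nat) := NGraph {
  vert : Type;
  mor : Type;
  src : mor -> vert;
  rng : mor -> vert;
  idm : vert -> mor;
  cmp : mor -> mor -> mor;
  deg : mor -> {ffun 'I_n -> nat};
  src_idm : forall v, src (idm v) = v;
  rng_idm : forall v, rng (idm v) = v;
  src_cmp : forall a b, src a = rng b -> src (cmp a b) = src b;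
  rng_cmp : forall a b, src a = rng b -> rng (cmp a b) = rng a;
  idm_cmpl : forall a, cmp (idm (rng a)) a = a;
  idm_cmpr : forall a, cmp a (idm (src a)) = a;
  cmpA : forall a b c, src a = rng b -> src b = rng c ->
           cmp a (cmp b c) = cmp (cmp a b) c;
  (* countability (of the morphisms, hence of the objects via idm) *)
  mor_countable : exists f : mor -> nat, injective f;
  deg_cmp : forall a b, src a = rng b -> deg (cmp a b) = degadd (deg a) (deg b);
  factorisation : forall l m p, deg l = degadd m p ->
    exists mu nu, src mu = rng nu /\ l = cmp mu nu /\ deg mu = m /\ deg nu = p /\
      forall mu' nu', src mu' = rng nu' -> l = cmp mu' nu' -> deg mu' = m ->
        deg nu' = p -> mu' = mu /\ nu' = nu
}.

Definition finitely_aligned (n : nat) (L : ngraph n) : Prop :=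
  forall mu nu : mor L, exists F : list (mor L),
    forall l, (right_mult (fun _ => True) (@src n L) (@rng n L) (@cmp n L) mu l /\
               right_mult (fun _ => True) (@src n L) (@rng n L) (@cmp n L) nu l)
      <-> exists c, In c F /\
           right_mult (fun _ => True) (@src n L) (@rng n L) (@cmp n L) c l.

Record groupoid (V : Type) := Groupoid {
  gel : Type;
  gs : gel -> V;
  gr : gel -> V;
  gid : V -> gel;
  gmul : gel -> gel -> gel;
  ginv : gel -> gel;
  gs_gid : forall v, gs (gid v) = v;
  gr_gid : forall v, gr (gid v) = v;
  gs_gmul : forall g h, gs g = gr h -> gs (gmul g h) = gs h;
  gr_gmul : forall g h, gs g = gr h -> gr (gmul g h) = gr g;
  gid_mull : forall g, gmul (gid (gr g)) g = g;
  gid_mulr : forall g, gmul g (gid (gs g)) = g;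
  gmulA : forall g h l, gs g = gr h -> gs h = gr l ->
            gmul g (gmul h l) = gmul (gmul g h) l;
  gs_ginv : forall g, gs (ginv g) = gr g;
  gr_ginv : forall g, gr (ginv g) = gs g;
  ginv_mulr : forall g, gmul g (ginv g) = gid (gr g);
  ginv_mull : forall g, gmul (ginv g) g = gid (gs g)
}.

Record self_similar (n : nat) (L : ngraph n) (G : groupoid (vert L)) := SelfSim {
  act : gel G -> mor L -> mor L;
  res : gel G -> mor L -> gel G;
  rng_act : forall g l, gs g = rng l -> rng (act g l) = gr g;
  act_gid : forall l, act (gid G (rng l)) l = l;
  act_gmul : forall g h l, gs g = gr h -> gs h = rng l ->
    act (gmul g h) l = act g (act h l);
  gs_res : forall g l, gs g = rng l -> gs (res g l) = src l;
  src_act : forall g l, gs g = rng l -> src (act g l) = gr (res g l);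
  res_gid : forall l, res (gid G (rng l)) l = gid G (src l);
  res_vert : forall g, res g (idm (gs g)) = g;
  res_cmp : forall g l m, gs g = rng l -> src l = rng m ->
    res g (cmp l m) = res (res g l) m;
  res_gmul : forall g h l, gs g = gr h -> gs h = rng l ->
    res (gmul g h) l = gmul (res g (act h l)) (res h l);
  act_cmp : forall g l m, gs g = rng l -> src l = rng m ->
    act g (cmp l m) = cmp (act g l) (act (res g l) m);
  deg_act : forall g l, gs g = rng l -> deg (act g l) = deg l
}.

Section ZS.
Variables (n : nat) (L : ngraph n) (G : groupoid (vert L)) (A : self_similar G).

Definition zs_valid (p : mor L * gel G) : Prop := src p.1 = gr p.2.
Definition zs_src (p : mor L * gel G) : vert L := gs p.2.
Definition zs_rng (p : mor L * gel G) : vert L := rng p.1.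
Definition zs_comp (p q : mor L * gel G) : mor L * gel G :=
  (cmp p.1 (act A p.2 q.1), gmul (res A p.2 q.1) q.2).

End ZS.

Definition gamma_zs (k : nat) (L : ngraph k.+1) (G : groupoid (vert L))
  (p : mor L * gel G) : Prop :=
  zs_valid p /\ deg p.1 ord_max = 0.

(* Main.v *)
Require Import Defs.
From mathcomp Require Import all_boot.
From Stdlib Require Import List Classical.
Set Implicit Arguments.
Unset Strict Implicit.

Lemma degadd_inj n (a b c : {ffun 'I_n -> nat}) : degadd a b = degadd a c -> b = c.
Proof.
move=> E; apply/ffunP=> i; move/ffunP: E => /(_ i); rewrite !ffunE.
by move/eqP; rewrite eqn_add2l => /eqP.
Qed.

Lemma deg_idm n (L : ngraph n) (v : vert L) : deg (idm v) = [ffun=> 0].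
Proof.
have E := @deg_cmp _ L (idm v) (idm v) (etrans (src_idm v) (esym (rng_idm v))).
  rewrite -{1}(rng_idm v) idm_cmpl in E.
  apply/ffunP=> i; move/ffunP: E => /(_ i); rewrite !ffunE.
  by move=> E; apply/eqP; rewrite -(eqn_add2l (deg (idm v) i)) addn0 -E.
Qed.

Lemma same_deg_ext n (L : ngraph n) (c x : mor L) :
  src c = rng x -> deg (cmp c x) = deg c -> cmp c x = c.
Proof.
move=> sx E.
have dx : deg x = [ffun=> 0].
  apply: (@degadd_inj _ (deg c)); rewrite -deg_cmp // E.
  by apply/ffunP=> i; rewrite !ffunE addn0.
have dm : deg (cmp c x) = degadd (deg c) (deg x) by rewrite deg_cmp.
have [mu [nu [_ [_ [_ [_ U]]]]]] := factorisation dm.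
have [e1 _] := U c x sx erefl erefl erefl.
have h1 : src (cmp c x) = rng (idm (src (cmp c x))) by rewrite rng_idm.
have h2 : cmp c x = cmp (cmp c x) (idm (src (cmp c x))) by rewrite idm_cmpr.
have h4 : deg (idm (src (cmp c x))) = deg x by rewrite deg_idm dx.
have [e2 _] := U _ _ h1 h2 E h4.
by rewrite e2 e1.
Qed.

Lemma cmp_cancel n (L : ngraph n) (l a b : mor L) :
  src l = rng a -> src l = rng b -> cmp l a = cmp l b -> a = b.
Proof.
move=> sa sb E.
have da : deg a = deg b by apply: (@degadd_inj _ (deg l)); rewrite -!deg_cmp // E.
have dm : deg (cmp l a) = degadd (deg l) (deg a) by rewrite deg_cmp.
have [mu [nu [_ [_ [_ [_ U]]]]]] := factorisation dm.
have [_ ->] := U l a sa erefl erefl erefl.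
by have [_ ->] := U l b sb E erefl (esym da).
Qed.

Lemma deg_ge n (L : ngraph n) (l : mor L) (m : {ffun 'I_n -> nat}) :
  (forall i, m i <= deg l i) -> deg l = degadd m [ffun i => deg l i - m i].
Proof. by move=> H; apply/ffunP=> i; rewrite !ffunE subnKC. Qed.

Lemma deg_cmp_ge n (L : ngraph n) (a b : mor L) i :
  src a = rng b -> deg a i <= deg (cmp a b) i.
Proof. by move=> s; rewrite deg_cmp // ffunE leq_addr. Qed.

Lemma pref_factor n (L : ngraph n) (l lam x mu nu : mor L) :
  src lam = rng x -> l = cmp lam x -> src mu = rng nu -> l = cmp mu nu ->
  (forall i, deg lam i <= deg mu i) -> exists b, src lam = rng b /\ mu = cmp lam b.
Proof.
move=> sx El snu Em H.
have [al [be [sab [Emu [dal [dbe _]]]]]] := factorisation (deg_ge H).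
have sbn : src be = rng nu by rewrite -snu Emu src_cmp.
have E2 : l = cmp al (cmp be nu) by rewrite cmpA // -Emu.
have dl : deg l = degadd (deg lam) (deg x) by rewrite El deg_cmp.
have [m0 [n0 [_ [_ [_ [_ U]]]]]] := factorisation dl.
have [e1 _] := U lam x sx El erefl erefl.
have dbn : deg (cmp be nu) = deg x.
  have sa2 : src al = rng (cmp be nu) by rewrite rng_cmp.
  by apply: (@degadd_inj _ (deg lam)); rewrite -dl E2 (deg_cmp sa2) dal.
have [e2 _] := U al (cmp be nu) (etrans sab (esym (rng_cmp sbn))) E2 dal dbn.
by exists be; rewrite -e1 in e2; rewrite -e2.
Qed.

Definition degmax n (a b : {ffun 'I_n -> nat}) := [ffun i => maxn (a i) (b i)].

Definition mce n (L : ngraph n) (l1 l2 mu : mor L) :=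
  deg mu = degmax (deg l1) (deg l2) /\
  (exists b, src l1 = rng b /\ mu = cmp l1 b) /\
  (exists b, src l2 = rng b /\ mu = cmp l2 b).

Lemma mce_factor n (L : ngraph n) (l l1 l2 x1 x2 : mor L) :
  src l1 = rng x1 -> src l2 = rng x2 -> l = cmp l1 x1 -> l = cmp l2 x2 ->
  exists mu nu, mce l1 l2 mu /\ src mu = rng nu /\ l = cmp mu nu.
Proof.
move=> s1 s2 E1 E2.
have H : forall i, degmax (deg l1) (deg l2) i <= deg l i.
  move=> i; rewrite ffunE geq_max.
  by rewrite {1}E1 E2 !deg_cmp_ge.
have [mu [nu [smn [Em [dmu _]]]]] := factorisation (deg_ge H).
exists mu, nu; split; last by split.
split; first by rewrite dmu; apply/ffunP=> i; rewrite !ffunE.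
split.
- by apply: pref_factor s1 E1 smn Em _ => i; rewrite dmu !ffunE leq_maxl.
- by apply: pref_factor s2 E2 smn Em _ => i; rewrite dmu !ffunE leq_maxr.
Qed.

Lemma filter_classic (T : Type) (P : T -> Prop) (l : list T) :
  exists l', forall x, In x l' <-> In x l /\ P x.
Proof.
elim: l => [|a l [l' IH]]; first by exists nil => x; split=> // [[]].
case: (classic (P a)) => Pa.
- exists (a :: l') => x /=; rewrite IH; intuition (subst; firstorder).
- exists l' => x /=; rewrite IH; intuition (subst; firstorder).
Qed.

Lemma mce_list n (L : ngraph n) (l1 l2 : mor L) :
  finitely_aligned L -> exists F, forall mu, In mu F <-> mce l1 l2 mu.
Proof.
move=> FA; have [F0 HF] := FA l1 l2.
have [F HF'] := filter_classic (mce l1 l2) F0.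
exists F => mu; rewrite HF'; split; first by case.
move=> M; split=> //.
have [c [Fc [x [_ [sx Emu]]]]] : exists c, In c F0 /\
   right_mult (fun _ => True) (@src n L) (@rng n L) (@cmp n L) c mu.
  apply/HF; case: M => _ [[b1 [s1 e1]] [b2 [s2 e2]]].
  by split; [exists b1 | exists b2].
have [[y1 [_ [s1 e1]]] [y2 [_ [s2 e2]]]] : right_mult (fun _ => True) (@src n L) (@rng n L) (@cmp n L) l1 c /\
  right_mult (fun _ => True) (@src n L) (@rng n L) (@cmp n L) l2 c.
  apply/HF; exists c; split=> //; exists (idm (src c)).
  by rewrite rng_idm idm_cmpr.
case: M => dmu _.
have dc : deg c = deg mu.
  apply/ffunP=> i; apply/eqP; rewrite eqn_leq.
  rewrite Emu deg_cmp_ge //= -Emu dmu ffunE geq_max.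
  by rewrite {1}e1 e2 !deg_cmp_ge.
have -> : mu = c by rewrite Emu same_deg_ext // -Emu.
done.
Qed.

Lemma gcancel V (G : groupoid V) (g h h' : gel G) :
  gs g = gr h -> gs g = gr h' -> gmul g h = gmul g h' -> h = h'.
Proof.
move=> s1 s2 E.
have K : forall x, gs g = gr x -> gmul (ginv g) (gmul g x) = x.
  move=> x sx; rewrite gmulA ?gs_ginv ?gr_ginv // ginv_mull sx gid_mull //.
by rewrite -(K h s1) -(K h' s2) E.
Qed.

Lemma act_inj n (L : ngraph n) (G : groupoid (vert L)) (A : self_similar G)
  g (a b : mor L) : gs g = rng a -> gs g = rng b -> act A g a = act A g b -> a = b.
Proof.
move=> sa sb E.
have K : forall x, gs g = rng x -> act A (ginv g) (act A g x) = x.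
  move=> x sx; rewrite -act_gmul ?gs_ginv ?gr_ginv // ginv_mull sx act_gid //.
by rewrite -(K a sa) -(K b sb) E.
Qed.

Lemma zs_comp_valid n (L : ngraph n) (G : groupoid (vert L)) (A : self_similar G)
  (p q : mor L * gel G) : zs_valid p -> zs_valid q -> zs_src p = zs_rng q ->
  zs_valid (zs_comp A p q) /\ zs_rng (zs_comp A p q) = zs_rng p /\
  zs_src (zs_comp A p q) = zs_src q.
Proof.
case: p => p1 p2; case: q => q1 q2; rewrite /zs_valid /zs_src /zs_rng /zs_comp /=.
move=> vp vq s.
have r1 : gs (res A p2 q1) = gr q2 by rewrite gs_res.
have sa : src p1 = rng (act A p2 q1) by rewrite rng_act.
split; last split.
- by rewrite src_cmp // src_act // gr_gmul.
- by rewrite rng_cmp.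
- by rewrite gs_gmul.
Qed.

Lemma zs_assoc n (L : ngraph n) (G : groupoid (vert L)) (A : self_similar G)
  (p q r : mor L * gel G) : zs_valid p -> zs_valid q -> zs_valid r ->
  zs_src p = zs_rng q -> zs_src q = zs_rng r ->
  zs_comp A (zs_comp A p q) r = zs_comp A p (zs_comp A q r).
Proof.
case: p => p1 p2; case: q => q1 q2; case: r => r1 r2;
  rewrite /zs_valid /zs_src /zs_rng /zs_comp /=.
move=> vp vq vr spq sqr.
have h1 : src q1 = rng (act A q2 r1) by rewrite rng_act.
have h2 : gs (res A p2 q1) = gr q2 by rewrite gs_res.
have h3 : src (act A p2 q1) = rng (act A (gmul (res A p2 q1) q2) r1).
  by rewrite rng_act ?gs_gmul // gr_gmul // src_act.
have h4 : src p1 = rng (act A p2 q1) by rewrite rng_act.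
have h5 : gs (res A (res A p2 q1) (act A q2 r1)) = gr (res A q2 r1).
  by rewrite gs_res ?src_act // rng_act // -h2.
have h6 : gs (res A q2 r1) = gr r2 by rewrite gs_res.
rewrite act_cmp // -act_gmul // cmpA // res_cmp // res_gmul // gmulA //.
Qed.

Lemma zs_cancel n (L : ngraph n) (G : groupoid (vert L)) (A : self_similar G)
  (c x x' : mor L * gel G) : zs_valid c -> zs_valid x -> zs_valid x' ->
  zs_src c = zs_rng x -> zs_src c = zs_rng x' ->
  zs_comp A c x = zs_comp A c x' -> x = x'.
Proof.
case: c => c1 c2; case: x => a h; case: x' => b h';
  rewrite /zs_valid /zs_src /zs_rng /zs_comp /=.
move=> vc va vb sa sb [E1 E2].
have ea : act A c2 a = act A c2 b.
  apply: (cmp_cancel _ _ E1); rewrite rng_act //.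
have eab : a = b by apply: act_inj ea.
subst b; congr pair; apply: gcancel E2; rewrite gs_res //.
Qed.

Lemma zs_id_comp n (L : ngraph n) (G : groupoid (vert L)) (A : self_similar G)
  (mu nu : mor L) (h : gel G) : src mu = rng nu -> gr h = src nu ->
  zs_comp A (mu, gid G (src mu)) (nu, h) = (cmp mu nu, h).
Proof.
move=> s sh; rewrite /zs_comp /= s act_gid res_gid -sh gid_mull //.
Qed.

Lemma zs_inv n (L : ngraph n) (G : groupoid (vert L)) (A : self_similar G)
  (l : mor L) (g : gel G) (al : mor L) : src l = gr g -> src l = rng al ->
  let a := (act A (ginv g) al, res A (ginv g) al) in
  zs_valid a /\ rng a.1 = gs g /\ zs_src a = src al /\ deg a.1 = deg al /\
  zs_comp A (l, g) a = (cmp l al, gid G (src al)).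
Proof.
move=> v s a.
have h1 : gs (ginv g) = rng al by rewrite gs_ginv -v.
have h2 : gs g = gr (ginv g) by rewrite gr_ginv.
rewrite /a /zs_valid /zs_src /zs_comp /=.
split; first by rewrite src_act.
split; first by rewrite rng_act // gr_ginv.
split; first by rewrite gs_res.
split; first by rewrite deg_act.
rewrite -act_gmul // -res_gmul // ginv_mulr -v s act_gid res_gid //.
Qed.

Theorem lemma3p16 (k : nat) (L : ngraph k.+1) (G : groupoid (vert L))
  (A : self_similar G) :
  finitely_aligned L ->
  concordant (@zs_valid _ L G) (@zs_src _ L G) (@zs_rng _ L G) (zs_comp A)
    (@gamma_zs k L G).
Proof.
move=> FA [l1 g1] [l2 g2] [v1 d1] [v2 d2] _.
rewrite /zs_valid /= in v1 v2; rewrite /= in d1 d2.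
have [Lm HLm] := mce_list l1 l2 FA.
pose F := List.map (fun mu => (mu, gid G (src mu))) Lm.
have inF : forall a, In a F <-> exists mu, a = (mu, gid G (src mu)) /\ mce l1 l2 mu.
  move=> a; rewrite /F in_map_iff; split.
  - by case=> mu [<- H]; exists mu; split=> //; apply/HLm.
  - by case=> mu [-> H]; exists mu; split=> //; apply/HLm.
have mce_last : forall mu, mce l1 l2 mu -> deg mu ord_max = 0.
  by move=> mu [-> _]; rewrite ffunE d1 d2.
have ext_last : forall l b : mor L, src l = rng b -> deg (cmp l b) ord_max = 0 -> deg b ord_max = 0.
  move=> l b s; rewrite deg_cmp // ffunE => /eqP; rewrite addn_eq0 => /andP [_ /eqP //].
exists F; split; last split; last split.
-
  move=> a /inF [mu [-> M]]; split; first by rewrite /zs_valid /= gr_gid.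
  exact: mce_last.
-
  move=> a a' /inF [mu [-> M]] /inF [mu' [-> M']] ne [x [vx [sx E]]].
  apply: ne; rewrite /zs_src /zs_rng /= gs_gid in sx.
  case: E => E _.
  have sz : src mu' = rng (act A (gid G (src mu')) x.1) by rewrite rng_act ?gs_gid // gr_gid.
  have emu : mu = mu'.
    rewrite E same_deg_ext // -E.
    by case: M => ->; case: M' => ->.
  by rewrite emu.
-
  move=> y; split.
  + case=> [[x1 [[vx1 dx1] [s1 E1]]] [x2 [[vx2 dx2] [s2 E2]]]].
    rewrite /zs_src /zs_rng /= in s1 s2; rewrite /zs_valid in vx1 vx2.
    have [vy [_ _]] := zs_comp_valid A (v1 : zs_valid (l1, g1)) vx1 s1.
    rewrite -E1 in vy.
    have r1 : src l1 = rng (act A g1 x1.1) by rewrite rng_act.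
    have r2 : src l2 = rng (act A g2 x2.1) by rewrite rng_act.
    have ey1 : y.1 = cmp l1 (act A g1 x1.1) by rewrite E1.
    have ey2 : y.1 = cmp l2 (act A g2 x2.1) by rewrite E2.
    have [mu [nu [M [smn Ey]]]] := mce_factor r1 r2 ey1 ey2.
    exists (mu, gid G (src mu)); split; first by apply/inF; exists mu.
    exists (nu, y.2); split; last split.
    * split; first by rewrite /zs_valid /= -vy Ey src_cmp.
      apply: (ext_last mu) => //; rewrite -Ey ey1 deg_cmp // ffunE deg_act //.
      by rewrite d1 dx1.
    * by rewrite /zs_src /zs_rng /= gs_gid.
    * rewrite zs_id_comp // -?Ey; first by case: (y).
      by rewrite -vy Ey src_cmp.
  + case=> a [/inF [mu [-> M]] [x [[vx dx] [sx ->]]]].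
    rewrite /zs_src /zs_rng /= gs_gid in sx.
    have M0 := M; case: M0 => _ [[b1 [sb1 eb1]] [b2 [sb2 eb2]]].
    have smu1 : src mu = src b1 by rewrite eb1 src_cmp.
    have smu2 : src mu = src b2 by rewrite eb2 src_cmp.
    have [va1 [ra1 [sa1 [da1 ca1]]]] := zs_inv A v1 sb1.
    have [va2 [ra2 [sa2 [da2 ca2]]]] := zs_inv A v2 sb2.
    have dmu := mce_last mu M.
    split.
    * set a1 := (act A (ginv g1) b1, res A (ginv g1) b1) in va1 ra1 sa1 da1 ca1.
      have sax : zs_src a1 = zs_rng x by rewrite sa1 -smu1.
      have [vc [rc _]] := zs_comp_valid A va1 vx sax.
      exists (zs_comp A a1 x); split; last split.
      - split=> //; rewrite /= deg_cmp; last by rewrite rng_act // -ra1.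
        rewrite ffunE (da1 : deg (act A (ginv g1) b1) = _) deg_act // dx addn0.
        by apply: (ext_last l1) => //; rewrite -eb1.
      - by rewrite rc.
      - by rewrite -zs_assoc // ca1 -eb1 smu1.
    * set a2 := (act A (ginv g2) b2, res A (ginv g2) b2) in va2 ra2 sa2 da2 ca2.
      have sax : zs_src a2 = zs_rng x by rewrite sa2 -smu2.
      have [vc [rc _]] := zs_comp_valid A va2 vx sax.
      exists (zs_comp A a2 x); split; last split.
      - split=> //; rewrite /= deg_cmp; last by rewrite rng_act // -ra2.
        rewrite ffunE (da2 : deg (act A (ginv g2) b2) = _) deg_act // dx addn0.
        by apply: (ext_last l2) => //; rewrite -eb2.
      - by rewrite rc.
      - by rewrite -zs_assoc // ca2 -eb2 smu2.
-
  move=> x1 x2 vx1 vx2 s1 s2 E.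
  rewrite /zs_src /zs_rng /= in s1 s2.
  have [vy [_ _]] := zs_comp_valid A (v1 : zs_valid (l1, g1)) vx1 s1.
  set y0 := zs_comp A (l1, g1) x1 in vy E.
  have r1 : src l1 = rng (act A g1 x1.1) by rewrite rng_act.
  have r2 : src l2 = rng (act A g2 x2.1) by rewrite rng_act.
  have ey1 : y0.1 = cmp l1 (act A g1 x1.1) by [].
  have ey2 : y0.1 = cmp l2 (act A g2 x2.1) by rewrite E.
  have [mu [nu [M [smn Ey]]]] := mce_factor r1 r2 ey1 ey2.
  have M0 := M; case: M0 => _ [[b1 [sb1 eb1]] [b2 [sb2 eb2]]].
  have smu1 : src mu = src b1 by rewrite eb1 src_cmp.
  have smu2 : src mu = src b2 by rewrite eb2 src_cmp.
  have [va1 [ra1 [sa1 [da1 ca1]]]] := zs_inv A v1 sb1.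
  have [va2 [ra2 [sa2 [da2 ca2]]]] := zs_inv A v2 sb2.
  set a1 := (act A (ginv g1) b1, res A (ginv g1) b1) in va1 ra1 sa1 da1 ca1.
  set a2 := (act A (ginv g2) b2, res A (ginv g2) b2) in va2 ra2 sa2 da2 ca2.
  have vy' : zs_valid (nu, y0.2) by rewrite /zs_valid /= -vy Ey src_cmp.
  have ca1' : zs_comp A (l1, g1) a1 = (mu, gid G (src mu)) by rewrite ca1 -eb1 smu1.
  have ca2' : zs_comp A (l2, g2) a2 = (mu, gid G (src mu)) by rewrite ca2 -eb2 smu2.
  have sa1y : zs_src a1 = zs_rng (nu, y0.2) by rewrite sa1 -smu1.
  have sa2y : zs_src a2 = zs_rng (nu, y0.2) by rewrite sa2 -smu2.
  have key : zs_comp A (mu, gid G (src mu)) (nu, y0.2) = y0.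
    rewrite zs_id_comp // -?Ey; first by case: (y0).
  exists a1, a2, (nu, y0.2).
  do 5 (split=> //).
  split; first by rewrite ca1' ca2'.
  split; first by rewrite ca1'; apply/inF; exists mu.
  do 2 (split=> //).
  have [vc1 [rc1 _]] := zs_comp_valid A va1 vy' sa1y.
  have [vc2 [rc2 _]] := zs_comp_valid A va2 vy' sa2y.
  split.
  + apply: (zs_cancel (A := A) (c := (l1, g1))) => //.
    * by rewrite /zs_src rc1.
    * by rewrite -zs_assoc // ca1' key.
  + apply: (zs_cancel (A := A) (c := (l2, g2))) => //.
    * by rewrite /zs_src rc2.
    * by rewrite -zs_assoc // ca2' key E.
Qed.
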